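(* Let $\kappa<\lambda$ be infinite cardinals with $\kappa$ regular. Let $\mathcal I$ be a normal $\kappa^+$-complete ideal on $\mathcal P_{\kappa^+}(\lambda)$, and assume that the quotient forcing $\mathcal P(\mathcal P_{\kappa^+}(\lambda))/\mathcal I$ has a $\kappa$-closed dense subset. Then $\mathrm{RC}(\kappa,\lambda)$ holds: every non-special tree of height $\kappa$ and size at most $\lambda$ has a non-special subtree of height $\kappa$ and size less than $\kappa^+$.
   Context: For a set $X$ and cardinal $\mu$, $\mathcal P_\mu(X)$ is the set of subsets of $X$ of size less than $\mu$. An ideal $\mathcal I$ on $\mathcal P_{\kappa^+}(\lambda)$ is $\kappa^+$-complete if it is closed under unions of at most $\kappa$ many members, and normal if it is fine (for each $\xi<\lambda$, $\{x:\xi\notin x\}\in\mathcal I$) and for every $\mathcal I$-positive set $A$ and every function $f$ on $A$ with $f(x)\in x$ for all $x\in A$, $f$ is constant on an $\mathcal I$-positive subset of $A$. The forcing $\mathcal P(\mathcal P_{\kappa^+}(\lambda))/\mathcal I$ consists of the $\mathcal I$-positive subsets of $\mathcal P_{\kappa^+}(\lambda)$ modulo $\mathcal I$, ordered by inclusion modulo $\mathcal I$. A forcing is $\kappa$-closed if every descending sequence of conditions of length less than $\kappa$ has a lower bound. A tree is a partial order $(T,<_T)$ in which the predecessors of each node are well-ordered. For a regular cardinal $\kappa$ and a tree $T$ of height $\kappa$, $T$ is special if there is $f:T\to T$ with $f(t)<_T t$ for all $t$ and such that for every $t\in T$, $f^{-1}[\{t\}]$ is a union of fewer than $\kappa$ antichains.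 For regular $\kappa$ and cardinal $\mu\ge\kappa^+$, $\mathrm{RC}(\kappa,\mu)$ states that every non-special tree of height $\kappa$ and size at most $\mu$ has a non-special subtree of height $\kappa$ and size less than $\kappa^+$. *)

(* Defs.v *)
(* Cardinals are modelled by types (|A| = cardinality of the
   type A); the regular cardinal kappa is modelled by a type K carrying a
   well-order ltK whose order type is kappa (an initial ordinal); ordinals
   < kappa are the proper initial segments {j : K | ltK j a}. *)

Definition inj_le (A B : Type) : Prop :=
  exists f : A -> B, forall x y, f x = f y -> x = y.

Definition card_lt (A B : Type) : Prop := inj_le A B /\ ~ inj_le B A.

Definition well_order (K : Type) (lt : K -> K -> Prop) : Prop :=
  (forall x, ~ lt x x) /\
  (forall x y z, lt x y -> lt y z -> lt x z) /\
  (forall x y, lt x y \/ x = y \/ lt y x) /\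
  well_founded lt.

Definition is_cardinal (K : Type) (lt : K -> K -> Prop) : Prop :=
  forall a : K, ~ inj_le K {x : K | lt x a}.

Definition infinite (K : Type) : Prop := inj_le nat K.

Definition regular (K : Type) (lt : K -> K -> Prop) : Prop :=
  forall A : K -> Prop, (forall a, exists b, A b /\ ~ lt b a) ->
    inj_le K {b : K | A b}.

Definition order_iso (A B : Type) (RA : A -> A -> Prop) (RB : B -> B -> Prop)
  : Prop :=
  exists f : A -> B,
    (forall x y, f x = f y -> x = y) /\ (forall y, exists x, f x = y) /\
    (forall x y, RA x y <-> RB (f x) (f y)).

Definition preds (T : Type) (R : T -> T -> Prop) (t : T) : Type :=
  {s : T | R s t}.

Definition preds_rel (T : Type) (R : T -> T -> Prop) (t : T)
  (a b : preds T R t) : Prop := R (proj1_sig a) (proj1_sig b).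

Definition is_tree (T : Type) (R : T -> T -> Prop) : Prop :=
  (forall x, ~ R x x) /\
  (forall x y z, R x y -> R y z -> R x z) /\
  (forall t, (forall a b : preds T R t,
                preds_rel T R t a b \/ a = b \/ preds_rel T R t b a) /\
             well_founded (preds_rel T R t)).

Definition init_seg (K : Type) (ltK : K -> K -> Prop) (a : K) : Type :=
  {j : K | ltK j a}.

Definition init_seg_rel (K : Type) (ltK : K -> K -> Prop) (a : K)
  (i j : init_seg K ltK a) : Prop := ltK (proj1_sig i) (proj1_sig j).

Definition node_height (K : Type) (ltK : K -> K -> Prop)
  (T : Type) (R : T -> T -> Prop) (t : T) (a : K) : Prop :=
  order_iso (preds T R t) (init_seg K ltK a)
            (preds_rel T R t) (init_seg_rel K ltK a).

Definition has_height (K : Type) (ltK : K -> K -> Prop)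
  (T : Type) (R : T -> T -> Prop) : Prop :=
  (forall t, exists a, node_height K ltK T R t a) /\
  (forall a, exists t, node_height K ltK T R t a).

Definition antichain (T : Type) (R : T -> T -> Prop) (A : T -> Prop) : Prop :=
  forall x y, A x -> A y -> x <> y -> ~ R x y /\ ~ R y x.

Definition special (K : Type) (T : Type) (R : T -> T -> Prop) : Prop :=
  exists f : T -> T,
    (forall t, (exists s, R s t) -> R (f t) t) /\
    (forall u : T, exists (J : Type) (Ac : J -> T -> Prop),
        card_lt J K /\ (forall j, antichain T R (Ac j)) /\
        (forall t, (exists s, R s t) -> f t = u -> exists j, Ac j t)).

Definition subtree (T : Type) (S : T -> Prop) : Type := {t : T | S t}.

Definition subtree_rel (T : Type) (R : T -> T -> Prop) (S : T -> Prop)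
  (a b : subtree T S) : Prop := R (proj1_sig a) (proj1_sig b).

Definition RC (K : Type) (ltK : K -> K -> Prop) (L : Type) : Prop :=
  forall (T : Type) (R : T -> T -> Prop),
    is_tree T R -> has_height K ltK T R -> inj_le T L -> ~ special K T R ->
    exists S : T -> Prop,
      has_height K ltK (subtree T S) (subtree_rel T R S) /\
      inj_le (subtree T S) K /\
      ~ special K (subtree T S) (subtree_rel T R S).

(* P_{kappa^+}(lambda): subsets of L of size <= kappa *)
Definition PK (K L : Type) : Type :=
  {x : L -> Prop | inj_le {l : L | x l} K}.

Definition ideal (K L : Type) (I : (PK K L -> Prop) -> Prop) : Prop :=
  I (fun _ => False) /\
  ~ I (fun _ => True) /\
  (forall A B : PK K L -> Prop, (forall x, A x -> B x) -> I B -> I A) /\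
  (forall A B, I A -> I B -> I (fun x => A x \/ B x)).

Definition kplus_complete (K L : Type) (I : (PK K L -> Prop) -> Prop) : Prop :=
  forall (J : Type) (F : J -> PK K L -> Prop),
    inj_le J K -> (forall j, I (F j)) -> I (fun x => exists j, F j x).

Definition normal (K L : Type) (I : (PK K L -> Prop) -> Prop) : Prop :=
  (forall xi : L, I (fun x => ~ proj1_sig x xi)) /\
  (forall (A : PK K L -> Prop) (f : PK K L -> L),
     ~ I A -> (forall x, A x -> proj1_sig x (f x)) ->
     exists xi : L, ~ I (fun x => A x /\ f x = xi)).

Definition le_I (K L : Type) (I : (PK K L -> Prop) -> Prop)
  (A B : PK K L -> Prop) : Prop := I (fun x => A x /\ ~ B x).

(* D (a set of I-positive sets, i.e. of representatives of conditions)
   is dense in the quotient forcing *)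
Definition dense_I (K L : Type) (I : (PK K L -> Prop) -> Prop)
  (D : (PK K L -> Prop) -> Prop) : Prop :=
  (forall A, D A -> ~ I A) /\
  (forall A, ~ I A -> exists B, D B /\ le_I K L I B A).

Definition kappa_closed (K : Type) (ltK : K -> K -> Prop) (L : Type)
  (I : (PK K L -> Prop) -> Prop) (D : (PK K L -> Prop) -> Prop) : Prop :=
  forall (a : K) (s : init_seg K ltK a -> PK K L -> Prop),
    (forall i, D (s i)) ->
    (forall i j, init_seg_rel K ltK a i j -> le_I K L I (s j) (s i)) ->
    exists B, D B /\ forall i, le_I K L I B (s i).

(* Main.v *)
Require Import Defs.
From Stdlib Require Import Classical ClassicalEpsilon ProofIrrelevance FunctionalExtensionality.

Lemma sig_eq {A : Type} {P : A -> Prop} (a b : {x | P x}) :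
  proj1_sig a = proj1_sig b -> a = b.
Proof. destruct a, b; simpl; intros ->. f_equal. apply proof_irrelevance. Qed.

Lemma inj_le_trans A B C : inj_le A B -> inj_le B C -> inj_le A C.
Proof. intros [f Hf] [g Hg]. exists (fun x => g (f x)). auto. Qed.

Lemma inj_le_refl A : inj_le A A.
Proof. exists (fun x => x). auto. Qed.

Lemma sig_inj_le A (P : A -> Prop) : inj_le {x | P x} A.
Proof. exists (@proj1_sig A P). intros; apply sig_eq; auto. Qed.

Lemma preds_small K ltK T R t a :
  node_height K ltK T R t a -> inj_le (preds T R t) K.
Proof.
  intros [f [Hf _]]. eapply inj_le_trans; [exists f; exact Hf|]. apply sig_inj_le.
Qed.

Lemma I_mono K L I : ideal K L I -> forall A B : PK K L -> Prop,
  I B -> (forall x, A x -> B x) -> I A.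
Proof. intros (_&_&H&_) A B HB HAB. eapply H; eauto. Qed.

Lemma I_cover K L I : ideal K L I -> forall A B C : PK K L -> Prop,
  I A -> I B -> (forall x, C x -> A x \/ B x) -> I C.
Proof. intros Hid A B C HA HB HC. destruct Hid as (H0&H1&H2&H3).
  eapply H2; [exact HC| apply H3; auto]. Qed.

Lemma I_empty K L I : ideal K L I -> forall A : PK K L -> Prop,
  (forall x, ~ A x) -> I A.
Proof. intros Hid A HA. destruct Hid as (H0&_&H2&_). eapply H2; [|exact H0].
  intros x Hx; exact (HA x Hx). Qed.

Lemma pos_ex K L I : ideal K L I -> forall A : PK K L -> Prop,
  ~ I A -> exists x, A x.
Proof. intros Hid A HA. apply NNPP; intro Hn. apply HA. apply I_empty; auto.
  intros x Hx; apply Hn; eauto. Qed.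

Lemma le_I_trans K L I : ideal K L I -> forall A B C,
  le_I K L I A B -> le_I K L I B C -> le_I K L I A C.
Proof. intros Hid A B C H1 H2. unfold le_I in *.
  eapply I_cover; [exact Hid|exact H1|exact H2|]. intros x [HA HC].
  destruct (classic (B x)); [right|left]; tauto. Qed.

Lemma decide K L I (Hid : ideal K L I) (Hc : kplus_complete K L I)
  (Y : Type) (v : PK K L -> Y) (P : Y -> Prop) :
  inj_le {y | P y} K -> forall q, ~ I q -> I (fun x => q x /\ ~ P (v x)) ->
  exists w, P w /\ ~ I (fun x => q x /\ v x = w).
Proof.
  intros Hs q Hq Hbad. apply NNPP; intro Hn. apply Hq.
  assert (HU: I (fun x => exists j : {y | P y}, (fun j x => q x /\ v x = proj1_sig j) j x)).
  { apply Hc; auto. intros [w Pw]. simpl. apply NNPP. intro Hw. apply Hn. exists w; auto. }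
  eapply I_cover; [exact Hid| exact HU | exact Hbad | ].
  intros x Hx. destruct (classic (P (v x))) as [Pv|Pv];
    [left; exists (exist _ (v x) Pv); simpl; auto | right; auto].
Qed.

Lemma wf_tree T R : is_tree T R -> well_founded R.
Proof.
  intros (Hirr&Htr&Hp) t. constructor. intros s Hst.
  destruct (Hp t) as [_ Hwf].
  assert (forall y : preds T R t, Acc R (proj1_sig y)).
  { intro y. induction (Hwf y) as [y _ IH]. constructor. intros r Hr.
    destruct y as [y Hy]; simpl in *.
    exact (IH (exist _ r (Htr _ _ _ Hr Hy)) Hr). }
  exact (H (exist _ s Hst)).
Qed.

Lemma lower_bound K ltK L I D T R t a (Hid : ideal K L I) :
  kappa_closed K ltK L I D -> node_height K ltK T R t a ->
  forall h : forall s, R s t -> PK K L -> Prop,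
  (forall s H, D (h s H)) ->
  (forall s s' H H', R s s' -> le_I K L I (h s' H') (h s H)) ->
  exists B, D B /\ forall s H, le_I K L I B (h s H).
Proof.
  intros Hkc [phi [Hinj [Hsur Hord]]] h HD Hdesc.
  assert (Hpsi : forall i, {y | phi y = i}).
  { intro i. apply constructive_indefinite_description. apply Hsur. }
  set (psi := fun i => proj1_sig (Hpsi i)).
  assert (Hpp : forall i, phi (psi i) = i) by (intro i; exact (proj2_sig (Hpsi i))).
  set (sq := fun i => h (proj1_sig (psi i)) (proj2_sig (psi i))).
  destruct (Hkc a sq) as [B [HB Hlow]].
  - intro i; apply HD.
  - intros i j Hij. unfold sq. apply Hdesc.
    apply (proj2 (Hord (psi i) (psi j))). rewrite !Hpp. exact Hij.
  - exists B; split; auto. intros s H.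
    assert (E : psi (phi (exist _ s H)) = exist _ s H) by (apply Hinj; apply Hpp).
    specialize (Hlow (phi (exist _ s H))). unfold sq in Hlow. rewrite E in Hlow.
    exact Hlow.
Qed.

Definition Dec (K L T : Type) (R : T -> T -> Prop) (good : PK K L -> Prop)
  (S : PK K L -> T -> Prop) (g : PK K L -> T -> T) (idx bd : PK K L -> T -> K)
  (t G : T) (i b : K) (x : PK K L) : Prop :=
  good x /\ S x t /\ ((exists s, R s t) -> g x t = G) /\ idx x t = i /\ bd x t = b.

Lemma decide_node K L I D T R (Hid : ideal K L I) (Hc : kplus_complete K L I)
  (Hd : dense_I K L I D) good S g idx bd t :
  inj_le (preds T R t) K ->
  I (fun x => ~ good x) -> I (fun x => ~ S x t) ->
  (forall x, good x -> S x t -> (exists s, R s t) -> R (g x t) t) ->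
  forall q, ~ I q -> exists p G i b, D p /\ le_I K L I p q /\
     I (fun x => p x /\ ~ Dec K L T R good S g idx bd t G i b x).
Proof.
  intros Hsm Hg HS P1 q Hq.
  set (q0 := fun x => q x /\ good x /\ S x t).
  assert (H0 : ~ I q0).
  { intro H. apply Hq. eapply I_cover; [exact Hid|exact H| exact (proj2 (proj2 (proj2 Hid)) _ _ Hg HS) |].
    intros x Hx. unfold q0. destruct (classic (good x)); destruct (classic (S x t)); tauto. }
  assert (HG : exists G, ~ I (fun x => q0 x /\ ((exists s, R s t) -> g x t = G))).
  { destruct (classic (exists s, R s t)) as [Hnm|Hm].
    - destruct (decide K L I Hid Hc T (fun x => g x t) (fun s => R s t) Hsm q0 H0) as [G [_ HG]].
      + apply I_empty; auto. intros x [[_ [Gx Sx]] Hn]. apply Hn. apply P1; auto.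
      + exists G. intro H. apply HG. eapply I_mono; [exact Hid|exact H|]. intros x [Hx Ex]; auto.
    - exists t. intro H. apply H0. eapply I_mono; [exact Hid|exact H|]. intros x Hx; split; auto.
      intro; contradiction. }
  destruct HG as [G HG].
  destruct (decide K L I Hid Hc K (fun x => idx x t) (fun _ => True) (sig_inj_le _ _) _ HG) as [i [_ Hi]].
  { apply I_empty; auto. tauto. }
  destruct (decide K L I Hid Hc K (fun x => bd x t) (fun _ => True) (sig_inj_le _ _) _ Hi) as [b [_ Hb]].
  { apply I_empty; auto. tauto. }
  destruct (proj2 Hd _ Hb) as [p [Dp Hp]].
  exists p, G, i, b. split; [exact Dp|split].
  - unfold le_I in *. eapply I_mono; [exact Hid|exact Hp|]. intros x [px nq]; split; auto.
    unfold q0 in *; tauto.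
  - unfold le_I in *. eapply I_mono; [exact Hid|exact Hp|]. intros x [px nq]; split; auto.
    intro H. apply nq. unfold Dec, q0 in *. tauto.
Qed.

Lemma pos_minus K L I : ideal K L I -> forall A B : PK K L -> Prop,
  ~ I A -> I B -> ~ I (fun x => A x /\ ~ B x).
Proof. intros Hid A B HA HB H. apply HA. eapply I_cover; [exact Hid|exact H|exact HB|].
  intros x Hx. destruct (classic (B x)); tauto. Qed.

Lemma special_from_data K ltK L I D T R
  (Hcard : is_cardinal K ltK) (Hid : ideal K L I) (Hc : kplus_complete K L I)
  (Hd : dense_I K L I D) (Hkc : kappa_closed K ltK L I D)
  (Htree : is_tree T R) (Hh : has_height K ltK T R)
  good S g idx bd
  (Hgood : I (fun x => ~ good x)) (HS : forall t, I (fun x => ~ S x t))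
  (P1 : forall x t, good x -> S x t -> (exists s, R s t) -> R (g x t) t)
  (P2 : forall x s t, good x -> S x s -> S x t -> (exists r, R r s) -> (exists r, R r t) ->
         g x s = g x t -> idx x s = idx x t -> s <> t -> ~ R s t)
  (P3 : forall x t, good x -> S x t -> (exists r, R r t) ->
         ltK (idx x t) (bd x (g x t))) :
  special K T R.
Proof.
  pose proof (wf_tree T R Htree) as Rwf.
  set (Spec := fun (t : T) (h : forall s, R s t -> PK K L -> Prop) (p : PK K L -> Prop) =>
    D p /\ ((forall s H, D (h s H)) ->
            (forall s s' H H', R s s' -> le_I K L I (h s' H') (h s H)) ->
            forall s H, le_I K L I p (h s H)) /\
    exists G i b, I (fun x => p x /\ ~ Dec K L T R good S g idx bd t G i b x)).
  assert (step_ex : forall t h, exists p, Spec t h p).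
  { intros t h. destruct (proj1 Hh t) as [a Ha].
    assert (HB : exists B, D B /\ ((forall s H, D (h s H)) ->
            (forall s s' H H', R s s' -> le_I K L I (h s' H') (h s H)) ->
            forall s H, le_I K L I B (h s H))).
    { destruct (classic ((forall s H, D (h s H)) /\
            (forall s s' H H', R s s' -> le_I K L I (h s' H') (h s H)))) as [[H1 H2]|Hn].
      - destruct (lower_bound K ltK L I D T R t a Hid Hkc Ha h H1 H2) as [B [DB HB]].
        exists B; auto.
      - destruct (proj2 Hd (fun _ => True) (proj1 (proj2 Hid))) as [B [DB _]].
        exists B; split; auto. intros H1 H2; exfalso; tauto. }
    destruct HB as [B [DB HB]].
    destruct (decide_node K L I D T R Hid Hc Hd good S g idx bd t (preds_small _ _ _ _ _ _ Ha)
                Hgood (HS t) (fun x => P1 x t) B (proj1 Hd B DB)) as [p [G [i [b [Dp [Hpb Hdec]]]]]].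
    exists p. split; [exact Dp|split].
    - intros H1 H2 s H. eapply le_I_trans; [exact Hid|exact Hpb|]. apply HB; auto.
    - exists G, i, b; exact Hdec. }
  set (step := fun t h => proj1_sig (constructive_indefinite_description _ (step_ex t h))).
  set (P := Fix Rwf (fun _ => PK K L -> Prop) step).
  assert (Peq : forall t, P t = step t (fun s _ => P s)).
  { intro t. unfold P. refine (@Fix_eq T R Rwf (fun _ => PK K L -> Prop) step _ t).
    intros x f1 f2 Hf.
    assert (f1 = f2) as ->; [|reflexivity].
    apply functional_extensionality_dep; intro y.
    apply functional_extensionality_dep; intro Hy. apply Hf. }
  assert (Inv : forall t, D (P t) /\ (forall s, R s t -> le_I K L I (P t) (P s)) /\
     exists G i b, I (fun x => P t x /\ ~ Dec K L T R good S g idx bd t G i b x)).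
  { intro t. induction t as [t IH] using (well_founded_ind Rwf).
    pose proof (proj2_sig (constructive_indefinite_description _ (step_ex t (fun s _ => P s)))) as Hs.
    fold (step t (fun s _ => P s)) in Hs. rewrite <- Peq in Hs.
    destruct Hs as [H1 [H2 H3]]. split; [exact H1|split; [|exact H3]].
    intros s Hs. apply (H2 (fun s H => proj1 (IH s H))); auto.
    intros s0 s' H H' Hss'. exact (proj1 (proj2 (IH s' H')) s0 Hss'). }
  assert (Hch : forall t, {trip : T * K * K | I (fun x => P t x /\
       ~ Dec K L T R good S g idx bd t (fst (fst trip)) (snd (fst trip)) (snd trip) x)}).
  { intro t. apply constructive_indefinite_description.
    destruct (proj2 (proj2 (Inv t))) as [G [i [b H]]]. exists (G, i, b); exact H. }
  set (Gf := fun t => fst (fst (proj1_sig (Hch t)))).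
  set (If := fun t => snd (fst (proj1_sig (Hch t)))).
  set (Bf := fun t => snd (proj1_sig (Hch t))).
  assert (HD : forall t, I (fun x => P t x /\ ~ Dec K L T R good S g idx bd t (Gf t) (If t) (Bf t) x))
    by (intro t; exact (proj2_sig (Hch t))).
  assert (Hpair : forall s t, R s t -> exists x,
     Dec K L T R good S g idx bd t (Gf t) (If t) (Bf t) x /\
     Dec K L T R good S g idx bd s (Gf s) (If s) (Bf s) x).
  { intros s t Hst.
    assert (Hpos : ~ I (fun x => (fun x => (fun x => P t x /\ ~ (P t x /\ ~ P s x)) x /\
       ~ (P t x /\ ~ Dec K L T R good S g idx bd t (Gf t) (If t) (Bf t) x)) x /\
       ~ (P s x /\ ~ Dec K L T R good S g idx bd s (Gf s) (If s) (Bf s) x))).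
    { apply pos_minus; auto. apply pos_minus; auto. apply pos_minus; auto.
      - exact (proj1 Hd _ (proj1 (Inv t))).
      - exact (proj1 (proj2 (Inv t)) s Hst). }
    destruct (pos_ex K L I Hid _ Hpos) as [x Hx]. exists x.
    split; apply NNPP; intro Hn; tauto. }
  assert (Hsingle : forall t, exists x, Dec K L T R good S g idx bd t (Gf t) (If t) (Bf t) x).
  { intro t. assert (Hpos : ~ I (fun x => P t x /\
       ~ (P t x /\ ~ Dec K L T R good S g idx bd t (Gf t) (If t) (Bf t) x))).
    { apply pos_minus; auto. exact (proj1 Hd _ (proj1 (Inv t))). }
    destruct (pos_ex K L I Hid _ Hpos) as [x Hx]. exists x.
    apply NNPP; intro Hn; tauto. }
  assert (Hreg : forall t, (exists s, R s t) -> R (Gf t) t).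
  { intros t Hnm. destruct (Hsingle t) as [x (Gx & Sx & Eg & _)].
    rewrite <- (Eg Hnm). apply P1; auto. }
  assert (Hanti : forall u i a b, Gf a = u -> If a = i -> (exists s, R s a) ->
            Gf b = u -> If b = i -> (exists s, R s b) -> a <> b -> ~ R a b).
  { intros u i a b Ga Ia Na Gb Ib Nb Hab Rab.
    destruct (Hpair a b Rab) as [x [(Gx & Sb & Eb & Ib' & _) (_ & Sa & Ea & Ia' & _)]].
    apply (P2 x a b Gx Sa Sb Na Nb); auto.
    - rewrite (Ea Na), (Eb Nb). congruence.
    - congruence. }
  exists Gf. split; [exact Hreg|].
  intro u. exists (init_seg K ltK (Bf u)).
  exists (fun j t => Gf t = u /\ If t = proj1_sig j /\ exists s, R s t).
  split; [split; [apply sig_inj_le| apply Hcard]|split].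
  - intros j a b (Ga & Ia & Na) (Gb & Ib & Nb) Hab. split.
    + exact (Hanti u _ a b Ga Ia Na Gb Ib Nb Hab).
    + exact (Hanti u _ b a Gb Ib Nb Ga Ia Na (fun E => Hab (eq_sym E))).
  - intros t Hnm Hf.
    assert (Hu : R u t) by (rewrite <- Hf; apply Hreg; auto).
    destruct (Hpair u t Hu) as [x [(Gx & St & Et & It & _) (_ & _ & _ & _ & Bu)]].
    assert (Hlt : ltK (If t) (Bf u)).
    { rewrite <- It, <- Bu. replace u with (g x t) by (rewrite (Et Hnm); exact Hf). apply P3; auto. }
    exists (exist _ (If t) Hlt). simpl. auto.
Qed.

Lemma sub_height T R (S : T -> Prop) (Hdown : forall t s, S t -> R s t -> S s)
  K ltK (a : subtree T S) k :
  node_height K ltK T R (proj1_sig a) k ->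
  node_height K ltK (subtree T S) (subtree_rel T R S) a k.
Proof.
  intros [phi [Hi [Hs Ho]]].
  exists (fun b : preds (subtree T S) (subtree_rel T R S) a =>
            phi (exist (fun s => R s (proj1_sig a)) (proj1_sig (proj1_sig b)) (proj2_sig b))).
  split; [|split].
  - intros b1 b2 E. apply Hi in E. apply sig_eq. apply sig_eq.
    exact (f_equal (@proj1_sig _ _) E).
  - intro y. destruct (Hs y) as [[s Hsz] Ez].
    pose proof (Hdown _ s (proj2_sig a) Hsz) as HSs.
    exists (exist (fun b => subtree_rel T R S b a) (exist S s HSs) Hsz). exact Ez.
  - intros b1 b2. apply (Ho (exist _ _ _) (exist _ _ _)).
Qed.

Lemma bounded_img K ltK (Hwo : well_order K ltK) (Hreg : regular K ltK) (J : Type)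
  (iota : J -> K) : (forall x y, iota x = iota y -> x = y) -> ~ inj_le K J ->
  exists b, forall j, ltK (iota j) b.
Proof.
  intros Hi Hn. apply NNPP; intro Hno. apply Hn.
  assert (Hun : forall a, exists b, (exists j, iota j = b) /\ ~ ltK b a).
  { intro a. apply NNPP; intro H. apply Hno. exists a. intro j.
    apply NNPP; intro H'. apply H. exists (iota j). split; eauto. }
  destruct (Hreg _ Hun) as [f Hf].
  assert (pre : forall y : {b | exists j, iota j = b}, {j | iota j = proj1_sig y}).
  { intro y. apply constructive_indefinite_description. exact (proj2_sig y). }
  exists (fun k => proj1_sig (pre (f k))). intros x y E.
  apply Hf. apply sig_eq. rewrite <- (proj2_sig (pre (f x))), <- (proj2_sig (pre (f y))).
  congruence.
Qed.

Lemma extract K ltK (Hwo : well_order K ltK) (Hreg : regular K ltK) (k0 : K)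
  T R (S : T -> Prop) (Hdown : forall t s, S t -> R s t -> S s) :
  special K (subtree T S) (subtree_rel T R S) ->
  exists (g : T -> T) (idx bd : T -> K),
   (forall t, S t -> (exists s, R s t) -> R (g t) t) /\
   (forall s t, S s -> S t -> (exists r, R r s) -> (exists r, R r t) ->
         g s = g t -> idx s = idx t -> s <> t -> ~ R s t) /\
   (forall t, S t -> (exists r, R r t) -> ltK (idx t) (bd (g t))).
Proof.
  intros [f [Hf1 Hf2]].
  set (sub := subtree T S). set (sR := subtree_rel T R S).
  assert (Hbh : forall u : sub, exists bh : K * (sub -> K),
    (forall a, (exists c, sR c a) -> f a = u -> ltK (snd bh a) (fst bh)) /\
    (forall a a', (exists c, sR c a) -> (exists c, sR c a') -> f a = u -> f a' = u ->
        snd bh a = snd bh a' -> a <> a' -> ~ sR a a')).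
  { intro u. destruct (Hf2 u) as [J [Ac [[[iota Hi] Hnot] [Hanti Hcov]]]].
    destruct (bounded_img K ltK Hwo Hreg J iota Hi Hnot) as [b Hb].
    assert (Hex : forall a, exists k, ((exists c, sR c a) /\ f a = u) ->
                   exists j, Ac j a /\ iota j = k).
    { intro a. destruct (classic ((exists c, sR c a) /\ f a = u)) as [[H1 H2]|Hn].
      - destruct (Hcov a H1 H2) as [j Hj]. exists (iota j). intros _. eauto.
      - exists b. intro; contradiction. }
    set (h := fun a => proj1_sig (constructive_indefinite_description _ (Hex a))).
    assert (Hh : forall a, ((exists c, sR c a) /\ f a = u) -> exists j, Ac j a /\ iota j = h a)
      by (intro a; exact (proj2_sig (constructive_indefinite_description _ (Hex a)))).
    exists (b, h). simpl. split.
    - intros a Ha Hfa. destruct (Hh a (conj Ha Hfa)) as [j [_ <-]]. apply Hb.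
    - intros a a' Ha Ha' Hfa Hfa' E Hne.
      destruct (Hh a (conj Ha Hfa)) as [j [Hj Ej]].
      destruct (Hh a' (conj Ha' Hfa')) as [j' [Hj' Ej']].
      assert (j = j') as <- by (apply Hi; congruence).
      exact (proj1 (Hanti j a a' Hj Hj' Hne)). }
  set (BH := fun u => proj1_sig (constructive_indefinite_description _ (Hbh u))).
  assert (HBH : forall u, (forall a, (exists c, sR c a) -> f a = u -> ltK (snd (BH u) a) (fst (BH u))) /\
    (forall a a', (exists c, sR c a) -> (exists c, sR c a') -> f a = u -> f a' = u ->
        snd (BH u) a = snd (BH u) a' -> a <> a' -> ~ sR a a'))
    by (intro u; exact (proj2_sig (constructive_indefinite_description _ (Hbh u)))).
  assert (Htr : forall t, exists tr : T * K * K, forall H : S t,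
     fst (fst tr) = proj1_sig (f (exist S t H)) /\
     snd (fst tr) = snd (BH (f (exist S t H))) (exist S t H) /\
     snd tr = fst (BH (exist S t H))).
  { intro t. destruct (classic (S t)) as [H0|Hn].
    - exists (proj1_sig (f (exist S t H0)), snd (BH (f (exist S t H0))) (exist S t H0),
              fst (BH (exist S t H0))).
      intro H. rewrite (proof_irrelevance _ H H0). simpl. auto.
    - exists (t, k0, k0). intro; contradiction. }
  set (tr := fun t => proj1_sig (constructive_indefinite_description _ (Htr t))).
  assert (Htr' : forall t (H : S t),
     fst (fst (tr t)) = proj1_sig (f (exist S t H)) /\
     snd (fst (tr t)) = snd (BH (f (exist S t H))) (exist S t H) /\
     snd (tr t) = fst (BH (exist S t H)))
    by (intro t; exact (proj2_sig (constructive_indefinite_description _ (Htr t)))).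
  assert (Hnm : forall t (H : S t), (exists s, R s t) -> exists c, sR c (exist S t H)).
  { intros t H [s Hs]. exists (exist S s (Hdown t s H Hs)). exact Hs. }
  exists (fun t => fst (fst (tr t))), (fun t => snd (fst (tr t))), (fun t => snd (tr t)).
  split; [|split].
  - intros t H Hn. destruct (Htr' t H) as [-> _]. exact (Hf1 _ (Hnm t H Hn)).
  - intros s t Hs Ht Hns Hnt Eg Ei Hne Rst.
    destruct (Htr' s Hs) as [Gs [Is _]]. destruct (Htr' t Ht) as [Gt [It _]].
    rewrite Gs, Gt in Eg. apply sig_eq in Eg. rewrite Is, It in Ei.
    rewrite <- Eg in Ei.
    refine (proj2 (HBH (f (exist S s Hs))) (exist S s Hs) (exist S t Ht)
              (Hnm s Hs Hns) (Hnm t Ht Hnt) eq_refl (eq_sym Eg) Ei _ Rst).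
    intro E. apply Hne. exact (f_equal (@proj1_sig _ _) E).
  - intros t H Hn. destruct (Htr' t H) as [Gt [It _]].
    rewrite It. simpl.
    pose proof (proj2_sig (f (exist S t H))) as HSg. simpl in HSg.
    rewrite Gt. destruct (Htr' _ HSg) as [_ [_ ->]].
    replace (exist S (proj1_sig (f (exist S t H))) HSg) with (f (exist S t H))
      by (apply sig_eq; reflexivity).
    apply (proj1 (HBH _)); auto.
Qed.

Theorem mainTheorem2 :
  forall (K : Type) (ltK : K -> K -> Prop) (L : Type)
         (I : (PK K L -> Prop) -> Prop),
    well_order K ltK -> is_cardinal K ltK -> infinite K -> regular K ltK ->
    card_lt K L ->
    ideal K L I -> kplus_complete K L I -> normal K L I ->
    (exists D, dense_I K L I D /\ kappa_closed K ltK L I D) ->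
    RC K ltK L.
Proof.
  intros K ltK L I Hwo Hcard Hinf Hreg Hlt Hid Hc Hn [D [Hd Hkc]].
  intros T R Htree Hh [e He] Hns.
  apply NNPP; intro Hno. apply Hns.
  assert (Hall : forall S, has_height K ltK (subtree T S) (subtree_rel T R S) ->
            inj_le (subtree T S) K -> special K (subtree T S) (subtree_rel T R S)).
  { intros S H1 H2. apply NNPP; intro H3. apply Hno. exists S; auto. }
  destruct Hinf as [n0 _]. set (k0 := n0 0).
  destruct Hlt as [[iKL _] _]. set (l0 := iKL k0).
  set (Sx := fun (x : PK K L) t => proj1_sig x (e t)).
  assert (Hlev : forall k, {t | node_height K ltK T R t k})
    by (intro k; apply constructive_indefinite_description; apply (proj2 Hh)).
  set (lev := fun k => proj1_sig (Hlev k)).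
  set (good := fun x => (forall t s, Sx x t -> R s t -> Sx x s) /\ forall k, Sx x (lev k)).
  assert (HS : forall t, I (fun x => ~ Sx x t)) by (intro t; exact (proj1 Hn (e t))).
  assert (Hgood : I (fun x => ~ good x)).
  { set (A1 := fun x => exists t s, Sx x t /\ R s t /\ ~ Sx x s).
    set (A2 := fun x => exists k, (fun k x => ~ Sx x (lev k)) k x).
    assert (HA2 : I A2) by (apply Hc; [apply inj_le_refl| intro k; apply HS]).
    assert (HA1 : I A1).
    { apply NNPP; intro HA.
      assert (Hfx : forall x, exists l, A1 x -> exists t, l = e t /\ Sx x t /\
                        exists s, R s t /\ ~ Sx x s).
      { intro x. destruct (classic (A1 x)) as [[t [s [H1 [H2 H3]]]]|Hn'].
        - exists (e t). intros _. exists t; eauto.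
        - exists l0. intro; contradiction. }
      set (fx := fun x => proj1_sig (constructive_indefinite_description _ (Hfx x))).
      assert (Hfx' : forall x, A1 x -> exists t, fx x = e t /\ Sx x t /\
                        exists s, R s t /\ ~ Sx x s)
        by (intro x; exact (proj2_sig (constructive_indefinite_description _ (Hfx x)))).
      destruct (proj2 Hn A1 fx HA) as [xi Hxi].
      { intros x Hx. destruct (Hfx' x Hx) as [t [-> [H _]]]. exact H. }
      destruct (pos_ex K L I Hid _ Hxi) as [x0 [Hx0 Ex0]].
      destruct (Hfx' x0 Hx0) as [t0 [Et0 _]].
      apply Hxi. destruct (proj1 Hh t0) as [a Ha].
      eapply I_mono; [exact Hid| apply (Hc (preds T R t0) (fun s x => ~ Sx x (proj1_sig s)));
                       [exact (preds_small _ _ _ _ _ _ Ha)| intro s; apply HS] |].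
      intros x [Hx Ex]. destruct (Hfx' x Hx) as [t [Et [_ [s [Hs Hns']]]]].
      assert (t = t0) as -> by (apply He; congruence).
      exists (exist _ s Hs). exact Hns'. }
    eapply I_cover; [exact Hid|exact HA1|exact HA2|].
    intros x Hx. unfold good in Hx.
    destruct (classic (forall k, Sx x (lev k))) as [Hk|Hk].
    - left. apply NNPP; intro H. apply Hx. split; auto.
      intros t s Ht Hst. apply NNPP; intro Hs. apply H. exists t, s; auto.
    - right. apply NNPP; intro H. apply Hk. intro k. apply NNPP; intro H'. apply H. exists k; auto. }
  assert (Hdata : forall x, exists trip : (T -> T) * (T -> K) * (T -> K),
     good x ->
     (forall t, Sx x t -> (exists s, R s t) -> R (fst (fst trip) t) t) /\
     (forall s t, Sx x s -> Sx x t -> (exists r, R r s) -> (exists r, R r t) ->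
         fst (fst trip) s = fst (fst trip) t -> snd (fst trip) s = snd (fst trip) t ->
         s <> t -> ~ R s t) /\
     (forall t, Sx x t -> (exists r, R r t) ->
         ltK (snd (fst trip) t) (snd trip (fst (fst trip) t)))).
  { intro x. destruct (classic (good x)) as [Gx|Gx].
    - destruct Gx as [Hdown Hlv].
      assert (Hsp : special K (subtree T (Sx x)) (subtree_rel T R (Sx x))).
      { apply Hall.
        - split.
          + intro a. destruct (proj1 Hh (proj1_sig a)) as [k Hk]. exists k.
            apply sub_height; auto.
          + intro k. exists (exist _ (lev k) (Hlv k)). apply sub_height; auto.
            exact (proj2_sig (Hlev k)).
        - destruct (proj2_sig x) as [hx Hhx].
          exists (fun a : subtree T (Sx x) => hx (exist (fun l => proj1_sig x l) (e (proj1_sig a)) (proj2_sig a))).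
          intros a b E. apply Hhx in E. apply sig_eq. apply He.
          exact (f_equal (@proj1_sig _ _) E). }
      destruct (extract K ltK Hwo Hreg k0 T R (Sx x) Hdown Hsp) as [g [idx [bd [P1 [P2 P3]]]]].
      exists (g, idx, bd). intros _. simpl. auto.
    - exists ((fun t => t), (fun _ => k0), (fun _ => k0)). intro; contradiction. }
  set (dat := fun x => proj1_sig (constructive_indefinite_description _ (Hdata x))).
  pose proof (fun x => proj2_sig (constructive_indefinite_description _ (Hdata x))) as Hdat.
  apply (special_from_data K ltK L I D T R Hcard Hid Hc Hd Hkc Htree Hh good Sx
           (fun x => fst (fst (dat x))) (fun x => snd (fst (dat x))) (fun x => snd (dat x))
           Hgood HS).
  - intros x t Gx. exact (proj1 (Hdat x Gx) t).
  - intros x s t Gx. exact (proj1 (proj2 (Hdat x Gx)) s t).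
  - intros x t Gx. exact (proj2 (proj2 (Hdat x Gx)) t).
Qed.
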